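(* For every $\alpha\in(0,1)$, the function $\beta\mapsto 1/v(\beta)$ is convex on $(1,1/\alpha)$, where $v(\beta)$ is given by $$\frac1{v(\beta)}=\frac{\beta+1}{\beta-1}+\frac{1-\alpha}{1+\alpha}\left(\frac{\beta+3}{2(\beta-1)}+\frac{\beta(\beta+1)}{(\beta-1)^2}(s_+-s_-)+C\,s_-\right),$$ with $s_+=\frac{1-\alpha}{1-\alpha\beta}$, $s_-=\frac{1-\alpha}{1-\alpha/\beta}$, $C=\frac{2\beta}{\beta-1}-\frac{\beta-\alpha}{\beta-\alpha^2}$. Consequently $v$ is a unimodal function of $\beta$ on $(1,1/\alpha)$ (nondecreasing up to some $\beta_{\max}$ and nonincreasing thereafter), with $v(\beta)\to0$ as $\beta\downarrow1$ and as $\beta\uparrow1/\alpha$.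
   Context: Here $v(\beta)$ is the asymptotic speed of the biased random walk on the random spanning tree of the ladder graph with parameter $\alpha=c+1-\sqrt{c^2+2c}$, as given by the displayed formula for $\beta\in(1,1/\alpha)$. *)

(* Defs.v *)
From Stdlib Require Import Reals.
From Coquelicot Require Import Coquelicot.
Open Scope R_scope.

Definition s_plus (a b : R) : R := (1 - a) / (1 - a * b).
Definition s_minus (a b : R) : R := (1 - a) / (1 - a / b).
Definition Cst (a b : R) : R := 2 * b / (b - 1) - (b - a) / (b - a ^ 2).

Definition inv_speed (a b : R) : R :=
  (b + 1) / (b - 1)
  + (1 - a) / (1 + a) *
    ((b + 3) / (2 * (b - 1))
     + b * (b + 1) / (b - 1) ^ 2 * (s_plus a b - s_minus a b)
     + Cst a b * s_minus a b).

Definition speed (a b : R) : R := / inv_speed a b.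

(* Main.v *)
Require Import Defs.
From Stdlib Require Import Reals Lra Psatz.
From Coquelicot Require Import Coquelicot.
Open Scope R_scope.

Lemma Rdiv_le_0_compat x y : 0 <= x -> 0 < y -> 0 <= x / y.
Proof. intros. unfold Rdiv. apply Rmult_le_pos; [lra|]. left; apply Rinv_0_lt_compat; lra. Qed.

Definition gA a := 2 + 4/(1+a).
Definition gc1 a := a*a*(3-a)/(1+a).
Definition gc2 a := a*a*((1-a)*(1-a))/(1+a).
Definition gK a := 1 + (1-a)/(2*(1+a)).
Definition g a b := gK a + gA a/(b-1) + 1/(1-a*b) - gc1 a/(b-a) - gc2 a/(b-a*a).

Lemma coefs a : 0 < a < 1 -> 0 <= gc1 a /\ 0 <= gc2 a /\ 0 < gA a - gc1 a - gc2 a /\ 0 < gK a.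
Proof.
intros ha. unfold gA, gc1, gc2, gK.
assert (0 < 1 + a) by lra.
repeat split.
- apply Rdiv_le_0_compat; [apply Rmult_le_pos; nra|lra].
- apply Rdiv_le_0_compat; [apply Rmult_le_pos; nra|lra].
- replace (2 + 4 / (1 + a) - a * a * (3 - a) / (1 + a) - a * a * ((1 - a) * (1 - a)) / (1 + a))
   with ((6 + 2*a - a*a*(3-a) - a*a*((1-a)*(1-a))) / (1+a)) by (field; lra).
  apply Rdiv_lt_0_compat; nra.
- assert (0 <= (1-a)/(2*(1+a))) by (apply Rdiv_le_0_compat; nra). lra.
Qed.

Lemma zpos p x y t : p < x -> p < y -> 0 <= t <= 1 -> t*x+(1-t)*y - p > 0.
Proof. intros. assert (0 <= t*(x-p)) by (apply Rmult_le_pos; lra).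
assert (0 <= (1-t)*(y-p)) by (apply Rmult_le_pos; lra).
destruct (Rle_lt_dec t 0).
- assert (t = 0) by lra. subst. lra.
- assert (0 < t*(x-p)) by (apply Rmult_lt_0_compat; lra). lra. Qed.

Definition Q p x y t := t/(x-p) + (1-t)/(y-p) - 1/(t*x+(1-t)*y - p).

Lemma Q_id p x y t : p < x -> p < y -> 0 <= t <= 1 ->
  Q p x y t = t*(1-t)*((x-y)*(x-y)) / ((x-p)*(y-p)*(t*x+(1-t)*y-p)).
Proof.
intros hx hy ht. assert (t*x+(1-t)*y - p > 0) by (apply zpos; lra).
unfold Q; field; lra.
Qed.

Lemma Q_mono p q x y t : q <= p -> p < x -> p < y -> 0 <= t <= 1 -> 0 <= Q q x y t <= Q p x y t.
Proof.
intros hpq hx hy ht. rewrite !Q_id by lra.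
assert (hz1 : t*x+(1-t)*y - p > 0) by (apply zpos; lra).
assert (hz2 : t*x+(1-t)*y - q > 0) by (apply zpos; lra).
assert (hn : 0 <= t*(1-t)*((x-y)*(x-y))).
{ apply Rmult_le_pos; [apply Rmult_le_pos; lra|]. apply Rle_0_sqr. }
assert (0 < (x-p)*(y-p)) by (apply Rmult_lt_0_compat; lra).
assert (0 < (x-q)*(y-q)) by (apply Rmult_lt_0_compat; lra).
split.
- apply Rdiv_le_0_compat; [lra|]. apply Rmult_lt_0_compat; lra.
- unfold Rdiv. apply Rmult_le_compat_l; [lra|]. apply Rinv_le_contravar.
  + apply Rmult_lt_0_compat; lra.
  + apply Rmult_le_compat; try lra. apply Rmult_le_compat; lra.
Qed.

Lemma g_convex a x y t : 0 < a < 1 -> 1 < x < /a -> 1 < y < /a -> 0 <= t <= 1 ->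
  g a (t*x+(1-t)*y) <= t * g a x + (1-t) * g a y.
Proof.
intros ha hx hy ht.
assert (hax : a*x < 1).
{ apply Rmult_lt_reg_l with (/a). apply Rinv_0_lt_compat; lra.
  rewrite <- Rmult_assoc, Rinv_l by lra. lra. }
assert (hay : a*y < 1).
{ apply Rmult_lt_reg_l with (/a). apply Rinv_0_lt_compat; lra.
  rewrite <- Rmult_assoc, Rinv_l by lra. lra. }
destruct (coefs a ha) as (h1 & h2 & h3 & h4).
assert (E : t * g a x + (1-t) * g a y - g a (t*x+(1-t)*y) =
   gA a * Q 1 x y t + (t/(1-a*x) + (1-t)/(1-a*y) - 1/(1-a*(t*x+(1-t)*y)))
   - gc1 a * Q a x y t - gc2 a * Q (a*a) x y t).
{ unfold g, Q, Rdiv. ring. }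
assert (hW : 0 <= t/(1-a*x) + (1-t)/(1-a*y) - 1/(1-a*(t*x+(1-t)*y))).
{ assert (hz : 1 - a*(t*x+(1-t)*y) > 0).
  { pose proof (zpos 0 (1-a*x) (1-a*y) t) as Z.
    replace (1 - a*(t*x+(1-t)*y)) with (t*(1-a*x)+(1-t)*(1-a*y) - 0) by ring. apply Z; lra. }
  replace (t/(1-a*x) + (1-t)/(1-a*y) - 1/(1-a*(t*x+(1-t)*y))) with
     (a*a*(t*(1-t)*((x-y)*(x-y))) / ((1-a*x)*(1-a*y)*(1-a*(t*x+(1-t)*y)))) by (field; lra).
  apply Rdiv_le_0_compat.
  - apply Rmult_le_pos; [apply Rle_0_sqr|]. apply Rmult_le_pos; [apply Rmult_le_pos; lra|apply Rle_0_sqr].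
  - apply Rmult_lt_0_compat; [|lra]. apply Rmult_lt_0_compat; lra. }
destruct (Q_mono 1 a x y t) as [_ Qa]; try lra.
assert (a*a <= 1) by (assert (a*a <= a*1) by (apply Rmult_le_compat_l; lra); lra).
destruct (Q_mono 1 (a*a) x y t) as [_ Qa2]; try lra.
destruct (Q_mono 1 1 x y t) as [Q1 _]; try lra.
assert (gc1 a * Q a x y t <= gc1 a * Q 1 x y t) by (apply Rmult_le_compat_l; lra).
assert (gc2 a * Q (a*a) x y t <= gc2 a * Q 1 x y t) by (apply Rmult_le_compat_l; lra).
assert (0 <= (gA a - gc1 a - gc2 a) * Q 1 x y t) by (apply Rmult_le_pos; lra).
lra.
Qed.

Lemma f_eq_g a b : 0 < a < 1 -> 1 < b < /a -> inv_speed a b = g a b.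
Proof.
intros ha hb.
assert (hab : a*b < 1).
{ apply Rmult_lt_reg_l with (/a). apply Rinv_0_lt_compat; lra.
  rewrite <- Rmult_assoc, Rinv_l by lra. lra. }
assert (b - a*a > 0) by nra.
unfold inv_speed, g, s_plus, s_minus, Defs.Cst, gK, gA, gc1, gc2.
field; repeat split; try lra; nra.
Qed.

Lemma ab_lt a b : 0 < a < 1 -> b < /a -> a*b < 1.
Proof. intros ha hb.
  apply Rmult_lt_reg_l with (/a). apply Rinv_0_lt_compat; lra.
  rewrite <- Rmult_assoc, Rinv_l by lra. lra. Qed.

Lemma g_lb a b : 0 < a < 1 -> 1 < b < /a ->
  (gA a - gc1 a - gc2 a) <= g a b * (b-1) /\ 1 <= g a b * (1 - a*b) /\ 0 < g a b.
Proof.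
intros ha hb. pose proof (ab_lt a b ha (proj2 hb)) as hab.
destruct (coefs a ha) as (h1 & h2 & h3 & h4).
assert (a*a <= 1) by (assert (a*a <= a*1) by (apply Rmult_le_compat_l; lra); lra).
assert (i1 : / (b-a) <= / (b-1)) by (apply Rinv_le_contravar; lra).
assert (i2 : / (b-a*a) <= / (b-1)) by (apply Rinv_le_contravar; lra).
assert (j1 : gc1 a * / (b-a) <= gc1 a * / (b-1)) by (apply Rmult_le_compat_l; lra).
assert (j2 : gc2 a * / (b-a*a) <= gc2 a * / (b-1)) by (apply Rmult_le_compat_l; lra).
assert (p1 : 0 < / (b-1)) by (apply Rinv_0_lt_compat; lra).
assert (p2 : 0 < / (1-a*b)) by (apply Rinv_0_lt_compat; lra).
assert (p3 : 0 < (gA a - gc1 a - gc2 a) * / (b-1)) by (apply Rmult_lt_0_compat; lra).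
assert (G1 : g a b >= gK a + (gA a - gc1 a - gc2 a) * / (b-1) + / (1-a*b)).
{ unfold g, Rdiv. lra. }
split; [|split].
- assert (E : (gK a + (gA a - gc1 a - gc2 a) * / (b-1) + / (1-a*b)) * (b-1)
      = (gK a + / (1-a*b)) * (b-1) + (gA a - gc1 a - gc2 a)) by (field; lra).
  assert (0 <= (gK a + / (1-a*b)) * (b-1)) by (apply Rmult_le_pos; lra).
  assert ((gK a + (gA a - gc1 a - gc2 a) * / (b-1) + / (1-a*b)) * (b-1) <= g a b * (b-1))
    by (apply Rmult_le_compat_r; lra). lra.
- assert (E : (gK a + (gA a - gc1 a - gc2 a) * / (b-1) + / (1-a*b)) * (1-a*b)
      = (gK a + (gA a - gc1 a - gc2 a) * / (b-1)) * (1-a*b) + 1) by (field; lra).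
  assert (0 <= (gK a + (gA a - gc1 a - gc2 a) * / (b-1)) * (1-a*b)) by (apply Rmult_le_pos; lra).
  assert ((gK a + (gA a - gc1 a - gc2 a) * / (b-1) + / (1-a*b)) * (1-a*b) <= g a b * (1-a*b))
    by (apply Rmult_le_compat_r; lra). lra.
- lra.
Qed.

Lemma g_cont a b : 0 < a < 1 -> 1 < b < /a -> continuity_pt (g a) b.
Proof.
intros ha hb. pose proof (ab_lt a b ha (proj2 hb)).
assert (a*a <= 1) by (assert (a*a <= a*1) by (apply Rmult_le_compat_l; lra); lra).
unfold g. reg; lra.
Qed.

Lemma btw a u v w : 0 < a < 1 -> 1 < u < /a -> 1 < w < /a ->
  (u <= v <= w \/ w <= v <= u) -> g a w <= g a u -> g a v <= g a u.
Proof.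
intros ha hu hw hv hg.
destruct (Req_dec u w) as [e|ne].
- subst. assert (v = w) by lra. subst. lra.
- set (t := (v - w)/(u - w)).
  assert (ht : 0 <= t <= 1).
  { unfold t. destruct hv as [hv|hv].
    + assert (u < w) by lra.
      replace ((v-w)/(u-w)) with ((w-v)/(w-u)) by (field; lra).
      split; [apply Rdiv_le_0_compat; lra|].
      apply Rmult_le_reg_r with (w-u); [lra|]. unfold Rdiv. rewrite Rmult_assoc, Rinv_l by lra. lra.
    + assert (w < u) by lra.
      split; [apply Rdiv_le_0_compat; lra|].
      apply Rmult_le_reg_r with (u-w); [lra|]. unfold Rdiv. rewrite Rmult_assoc, Rinv_l by lra. lra. }
  assert (ev : v = t*u + (1-t)*w) by (unfold t; field; lra).
  rewrite ev. eapply Rle_trans; [apply g_convex; auto|].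
  assert ((1-t) * g a w <= (1-t) * g a u) by (apply Rmult_le_compat_l; lra). lra.
Qed.

Lemma speed_eq a b : 0 < a < 1 -> 1 < b < /a -> speed a b = / g a b.
Proof. intros. unfold speed. rewrite f_eq_g; auto. Qed.

Theorem mainTheorem2 (a : R) (ha : 0 < a < 1) :
  (forall x y t : R, 1 < x < / a -> 1 < y < / a -> 0 <= t <= 1 ->
     inv_speed a (t * x + (1 - t) * y)
       <= t * inv_speed a x + (1 - t) * inv_speed a y)
  /\
  (exists bmax : R, 1 < bmax < / a /\
     (forall x y : R, 1 < x -> x <= y -> y <= bmax -> speed a x <= speed a y) /\
     (forall x y : R, bmax <= x -> x <= y -> y < / a -> speed a y <= speed a x))
  /\
  filterlim (speed a) (at_right 1) (locally 0)
  /\ filterlim (speed a) (at_left (/ a)) (locally 0).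
Proof.
assert (hia : 1 < /a).
{ rewrite <- Rinv_1. apply Rinv_lt_contravar; lra. }
destruct (coefs a ha) as (h1 & h2 & hD & h4).
set (D := gA a - gc1 a - gc2 a) in *.
split; [|split; [|split]].
- intros x y t hx hy ht.
  assert (1 < t*x+(1-t)*y < /a).
  { split.
    - pose proof (zpos 1 x y t). lra.
    - pose proof (zpos 0 (/a - x) (/a - y) t). assert (t*(/a-x)+(1-t)*(/a-y) - 0 > 0) by (apply H; lra).
      lra. }
  rewrite !f_eq_g by auto. apply g_convex; auto.
- set (m := (1 + /a)/2).
  assert (hm : 1 < m < /a) by (unfold m; lra).
  destruct (g_lb a m ha hm) as (_ & _ & gm).
  set (L := g a m + 1).
  assert (hL : 1 < L) by (unfold L; lra).
  set (c := Rmin (1 + D/L) m).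
  set (d := Rmax (/a - /(a*L)) m).
  assert (hDL : 0 < D/L) by (apply Rdiv_lt_0_compat; lra).
  assert (haL : /(a*L) < /a).
  { apply Rinv_lt_contravar. { apply Rmult_lt_0_compat; [lra|apply Rmult_lt_0_compat; lra]. }
    rewrite <- (Rmult_1_r a) at 1. apply Rmult_lt_compat_l; lra. }
  assert (haL0 : 0 < /(a*L)) by (apply Rinv_0_lt_compat, Rmult_lt_0_compat; lra).
  assert (hc : 1 < c <= m) by (unfold c; split; [apply Rmin_glb_lt|apply Rmin_r]; lra).
  assert (hd : m <= d < /a) by (unfold d; split; [apply Rmax_r|apply Rmax_lub_lt]; lra).
  destruct (continuity_ab_min (g a) c d) as (M & HM & hMcd); [lra| |].
  { intros z hz. apply g_cont; auto; lra. }
  assert (hM : 1 < M < /a) by lra.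
  assert (Hmin : forall x, 1 < x < /a -> g a M <= g a x).
  { intros x hx. destruct (g_lb a x ha hx) as (lb1 & lb2 & gx). fold D in lb1.
    assert (gMm : g a M <= g a m) by (apply HM; lra).
    destruct (Rlt_le_dec x c) as [xc|xc].
    - assert (x < 1 + D/L) by (pose proof (Rmin_l (1 + D/L) m); fold c in H; lra).
      destruct (Rle_lt_dec (g a M) (g a x)) as [ok|bad]; [exact ok|exfalso].
      assert (x - 1 < D/L) by lra.
      assert (L*(x-1) < D).
      { apply Rmult_lt_reg_r with (/L). apply Rinv_0_lt_compat; lra.
        replace (L*(x-1)*/L) with (x-1) by (field; lra). exact H0. }
      assert (g a x * (x-1) <= L * (x-1)) by (apply Rmult_le_compat_r; unfold L in *; lra).
      lra.
    - destruct (Rle_lt_dec x d) as [xd|xd]; [apply HM; lra|].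
      assert (x > /a - /(a*L)) by (pose proof (Rmax_l (/a - /(a*L)) m); fold d in H; lra).
      destruct (Rle_lt_dec (g a M) (g a x)) as [ok|bad]; [exact ok|exfalso].
      assert (L*(1-a*x) < 1).
      { assert (a*(/a - x) < a * /(a*L)) by (apply Rmult_lt_compat_l; lra).
        replace (a*(/a - x)) with (1 - a*x) in H0 by (field; lra).
        replace (a * /(a*L)) with (/L) in H0 by (field; lra).
        apply Rmult_lt_reg_r with (/L). apply Rinv_0_lt_compat; lra.
        replace (L*(1-a*x)*/L) with (1-a*x) by (field; lra). lra. }
      pose proof (ab_lt a x ha (proj2 hx)).
      assert (g a x * (1-a*x) <= L * (1-a*x)) by (apply Rmult_le_compat_r; unfold L in *; lra).
      lra. }
  exists M. split; [exact hM|split].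
  + intros x y hx hxy hyM.
    assert (hxa : 1 < x < /a) by lra. assert (hya : 1 < y < /a) by lra.
    rewrite !speed_eq by auto.
    destruct (g_lb a y ha hya) as (_ & _ & gy).
    apply Rinv_le_contravar; [exact gy|].
    apply (btw a x y M); auto; try lra; apply Hmin; auto.
  + intros x y hMx hxy hy.
    assert (hxa : 1 < x < /a) by lra. assert (hya : 1 < y < /a) by lra.
    rewrite !speed_eq by auto.
    destruct (g_lb a x ha hxa) as (_ & _ & gx).
    apply Rinv_le_contravar; [exact gx|].
    apply (btw a y x M); auto; try lra; apply Hmin; auto.
- apply filterlim_locally. intros eps.
  assert (hpos : 0 < Rmin (D*eps) (/a - 1)).
  { apply Rmin_glb_lt; [apply Rmult_lt_0_compat; [lra|apply cond_pos]|lra]. }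
  exists (mkposreal _ hpos). intros y hy hy1. simpl in hy.
  apply Rabs_lt_between' in hy. destruct hy as [_ hy].
  pose proof (Rmin_l (D*eps) (/a-1)). pose proof (Rmin_r (D*eps) (/a-1)).
  assert (hya : 1 < y < /a) by lra.
  destruct (g_lb a y ha hya) as (lb1 & _ & gy). fold D in lb1.
  change (Rabs (speed a y - 0) < eps). rewrite speed_eq by auto.
  rewrite Rminus_0_r, Rabs_pos_eq by (left; apply Rinv_0_lt_compat; lra).
  apply Rmult_lt_reg_r with (g a y); [lra|]. rewrite Rinv_l by lra.
  assert (y - 1 < D*eps) by lra.
  assert (g a y * (y-1) < g a y * (D*eps)) by (apply Rmult_lt_compat_l; lra).
  apply Rmult_lt_reg_l with D; [lra|].
  replace (g a y * (D*eps)) with (D * (eps * g a y)) in H2 by ring. lra.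
- apply filterlim_locally. intros eps.
  assert (hpos : 0 < Rmin (eps/a) (/a - 1)).
  { apply Rmin_glb_lt; [apply Rdiv_lt_0_compat; [apply cond_pos|lra]|lra]. }
  exists (mkposreal _ hpos). intros y hy hy1. simpl in hy.
  apply Rabs_lt_between' in hy. destruct hy as [hy _].
  pose proof (Rmin_l (eps/a) (/a-1)). pose proof (Rmin_r (eps/a) (/a-1)).
  assert (hya : 1 < y < /a) by lra.
  destruct (g_lb a y ha hya) as (_ & lb2 & gy).
  change (Rabs (speed a y - 0) < eps). rewrite speed_eq by auto.
  rewrite Rminus_0_r, Rabs_pos_eq by (left; apply Rinv_0_lt_compat; lra).
  apply Rmult_lt_reg_r with (g a y); [lra|]. rewrite Rinv_l by lra.
  assert (1 - a*y < eps).
  { assert (/a - y < eps/a) by lra.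
    assert (a*(/a - y) < a*(eps/a)) by (apply Rmult_lt_compat_l; lra).
    replace (a*(/a-y)) with (1 - a*y) in H2 by (field; lra).
    replace (a*(eps/a)) with (pos eps) in H2 by (field; lra). lra. }
  pose proof (ab_lt a y ha (proj2 hya)).
  assert (g a y * (1-a*y) < g a y * eps) by (apply Rmult_lt_compat_l; lra).
  lra.
Qed.
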